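(* Let $\Gamma$ be a maximal consistent set of SBTrust, $\delta$ a propositional formula, and $(\Delta,\varphi,i)\in S_\Gamma$. Then (a) if $(\Delta,\varphi,i)\in\mathit{max}([\delta]_\Gamma)$, then $\Delta$ is $\delta$-likely for $\Gamma$; (b) if $\Delta$ is $\delta$-likely for $\Gamma$, then $(\Delta,\delta,i)\in\mathit{max}([\delta]_\Gamma)$.
   Context: $\mathcal{L}_T$: $\alpha::=\varphi\mid\varphi\rightsquigarrow\varphi\mid B(\alpha)\mid\alpha*\alpha\mid\neg\alpha$, with $\varphi$ ranging over classical propositional formulas (set $\mathcal{L}_{CL}$) and $*\in\{\land,\lor,\to,\leftrightarrow\}$. SBTrust is the Hilbert system ($\varphi,\psi,\chi,\varphi_i,\psi_i$ propositional; $\alpha,\beta\in\mathcal{L}_T$; rule outputs in $\mathcal{L}_T$): classical tautologies and Modus Ponens; $\varphi\rightsquigarrow\varphi$; $(\varphi\rightsquigarrow\bot)\to\neg\varphi$; $((\psi\land\chi)\rightsquigarrow\varphi)\to(\psi\rightsquigarrow(\chi\to\varphi))$; $(\neg(\varphi\leftrightarrow\psi)\rightsquigarrow\bot)\to((\varphi\rightsquigarrow\chi)\leftrightarrow(\psi\rightsquigarrow\chi))$; rule RCK: from $(\varphi_1\land\dots\land\varphi_n)\to\varphi_{n+1}$ infer $\bigwedge_{j\le n}(\psi\rightsquigarrow\varphi_j)\to(\psi\rightsquigarrow\varphi_{n+1})$; rule $\mathbf{S5_F}$: from $(\ell_1\land\dots\land\ell_n)\to\chi$ infer $(\ell_1\land\dots\land\ell_n)\to(\neg\chi\rightsquigarrow\bot)$,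 each $\ell_j$ being $\varphi_j\rightsquigarrow\psi_j$ or its negation, $\chi$ propositional; $B(\alpha\to\beta)\to(B\alpha\to B\beta)$; $B\alpha\to\neg B\neg\alpha$; $B\alpha\to BB\alpha$; necessitation for $B$. A maximal consistent set (MCS) is $\Gamma\subseteq\mathcal{L}_T$ with $\Gamma\nvdash\bot$ and, for each $\alpha$, $\alpha\in\Gamma$ or $\neg\alpha\in\Gamma$. For MCSs, $\Gamma\leftrightsquigarrow\Delta$ iff they contain the same formulas of the form $\chi\rightsquigarrow\psi$; $[\Gamma]_\leftrightsquigarrow$ is the equivalence class. $\rightsquigarrow_\varphi(\Gamma)=\{\psi:\varphi\rightsquigarrow\psi\in\Gamma\}$, and $\Delta$ is $\varphi$-likely for $\Gamma$ if $\rightsquigarrow_\varphi(\Gamma)\subseteq\Delta$. Let $S_\Gamma=[\Gamma]_\leftrightsquigarrow\times\mathcal{L}_{CL}\times\{0,1,2\}$ and $[\delta]_\Gamma=\{(\Delta,\varphi,i)\in S_\Gamma:\delta\in\Delta\}$. Define $\succeq_\Gamma\subseteq S_\Gamma\times S_\Gamma$ by: $(\Delta,\varphi,i)\succeq_\Gamma(\Omega,\psi,j)$ iff ($\Delta$ is $\varphi$-likely for $\Gamma$ and $\varphi\in\Omega$) or ($i=1,j=0$) or ($i=2,j=1$) or ($i=0,j=2$). For $X\subseteq S_\Gamma$, $\mathit{max}(X)=\{x\in X:\forall y\in X\,(y\succeq_\Gamma x\Rightarrow x\succeq_\Gamma y)\}$. *)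

(* Defs.v *)
From Stdlib Require Import List Bool.
Import ListNotations.
Set Implicit Arguments.

Inductive PL : Type :=
| PVar : nat -> PL
| PBot : PL
| PNeg : PL -> PL
| PAnd : PL -> PL -> PL
| POr  : PL -> PL -> PL
| PImp : PL -> PL -> PL
| PIff : PL -> PL -> PL.

Definition PTop : PL := PNeg PBot.

Inductive LT : Type :=
| TP   : PL -> LT
| Cond : PL -> PL -> LT
| Bel  : LT -> LT
| TNeg : LT -> LT
| TAnd : LT -> LT -> LT
| TOr  : LT -> LT -> LT
| TImp : LT -> LT -> LT
| TIff : LT -> LT -> LT.

Definition TBot : LT := TP PBot.
Definition TTop : LT := TP PTop.

Fixpoint evalPL (v : nat -> bool) (p : PL) : bool :=
  match p with
  | PVar n => v n
  | PBot => false
  | PNeg a => negb (evalPL v a)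
  | PAnd a b => evalPL v a && evalPL v b
  | POr a b => evalPL v a || evalPL v b
  | PImp a b => implb (evalPL v a) (evalPL v b)
  | PIff a b => eqb (evalPL v a) (evalPL v b)
  end.

Fixpoint evalLT (v : nat -> bool) (w : LT -> bool) (a : LT) : bool :=
  match a with
  | TP p => evalPL v p
  | Cond _ _ => w a
  | Bel _ => w a
  | TNeg x => negb (evalLT v w x)
  | TAnd x y => evalLT v w x && evalLT v w y
  | TOr x y => evalLT v w x || evalLT v w y
  | TImp x y => implb (evalLT v w x) (evalLT v w y)
  | TIff x y => eqb (evalLT v w x) (evalLT v w y)
  end.

(* Classical tautologies of L_T (i.e. instances of propositional tautologies). *)
Definition tautology (a : LT) : Prop := forall v w, evalLT v w a = true.

Definition pconj (l : list PL) : PL := fold_right PAnd PTop l.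
Definition tconj (l : list LT) : LT := fold_right TAnd TTop l.

Inductive cond_literal : LT -> Prop :=
| lit_pos : forall p q, cond_literal (Cond p q)
| lit_neg : forall p q, cond_literal (TNeg (Cond p q)).

Inductive Thm : LT -> Prop :=
| ax_taut : forall a, tautology a -> Thm a
| r_mp : forall a b, Thm (TImp a b) -> Thm a -> Thm b
| ax_id : forall p, Thm (Cond p p)
| ax_bot : forall p, Thm (TImp (Cond p PBot) (TP (PNeg p)))
| ax_ded : forall p q r,
    Thm (TImp (Cond (PAnd q r) p) (Cond q (PImp r p)))
| ax_lle : forall p q r,
    Thm (TImp (Cond (PNeg (PIff p q)) PBot) (TIff (Cond p r) (Cond q r)))
| r_rck : forall (ps : list PL) (pn q : PL),
    Thm (TP (PImp (pconj ps) pn)) ->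
    Thm (TImp (tconj (map (fun p => Cond q p) ps)) (Cond q pn))
| r_s5f : forall (ls : list LT) (chi : PL),
    (forall l, In l ls -> cond_literal l) ->
    Thm (TImp (tconj ls) (TP chi)) ->
    Thm (TImp (tconj ls) (Cond (PNeg chi) PBot))
| ax_K : forall a b, Thm (TImp (Bel (TImp a b)) (TImp (Bel a) (Bel b)))
| ax_D : forall a, Thm (TImp (Bel a) (TNeg (Bel (TNeg a))))
| ax_4 : forall a, Thm (TImp (Bel a) (Bel (Bel a)))
| r_nec : forall a, Thm a -> Thm (Bel a).

Definition set := LT -> Prop.

Definition imp_chain (l : list LT) (a : LT) : LT := fold_right TImp a l.

Definition Der (G : set) (a : LT) : Prop :=
  exists l, (forall g, In g l -> G g) /\ Thm (imp_chain l a).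

Definition MCS (G : set) : Prop :=
  ~ Der G TBot /\ forall a, G a \/ G (TNeg a).

Definition cond_equiv (G D : set) : Prop :=
  forall p q, G (Cond p q) <-> D (Cond p q).

Definition likely (G : set) (p : PL) (D : set) : Prop :=
  forall q, G (Cond p q) -> D (TP q).

Inductive idx3 : Type := i0 | i1 | i2.

Definition S_elt : Type := (set * PL * idx3)%type.

Definition inS (G : set) (x : S_elt) : Prop :=
  let '(D, _, _) := x in MCS D /\ cond_equiv G D.

Definition trset (G : set) (d : PL) (x : S_elt) : Prop :=
  inS G x /\ (let '(D, _, _) := x in D (TP d)).

Definition succeq (G : set) (x y : S_elt) : Prop :=
  let '(D, p, i) := x in
  let '(Om, _, j) := y in
  (likely G p D /\ Om (TP p))
  \/ (i = i1 /\ j = i0) \/ (i = i2 /\ j = i1) \/ (i = i0 /\ j = i2).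

Definition maxel (G : set) (X : S_elt -> Prop) (x : S_elt) : Prop :=
  X x /\ forall y, X y -> succeq G y x -> succeq G x y.

(* Main.v *)
Require Import Defs.
From Stdlib Require Import List Bool Arith Cantor Classical ClassicalEpsilon.
Import ListNotations.

Definition pr (a b : nat) : nat := Cantor.to_nat (a, b).
Arguments pr : simpl never.

Lemma pr_inj a b c d : pr a b = pr c d -> a = c /\ b = d.
Proof.
  unfold pr; intro H.
  assert (E : Cantor.of_nat (Cantor.to_nat (a,b)) = Cantor.of_nat (Cantor.to_nat (c,d)))
    by (rewrite H; reflexivity).
  rewrite !Cantor.cancel_of_to in E. injection E; auto.
Qed.

Fixpoint encP (p : PL) : nat :=
  match p with
  | PVar n => pr 0 n
  | PBot => pr 1 0
  | PNeg a => pr 2 (encP a)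
  | PAnd a b => pr 3 (pr (encP a) (encP b))
  | POr a b => pr 4 (pr (encP a) (encP b))
  | PImp a b => pr 5 (pr (encP a) (encP b))
  | PIff a b => pr 6 (pr (encP a) (encP b))
  end.

Ltac prinj :=
  repeat match goal with
  | H : pr _ _ = pr _ _ |- _ => apply pr_inj in H; destruct H
  end.

Lemma encP_inj : forall a b, encP a = encP b -> a = b.
Proof.
  induction a; destruct b; simpl; intro H; prinj; try discriminate; subst;
    try reflexivity; f_equal; auto.
Qed.

Fixpoint encT (a : LT) : nat :=
  match a with
  | TP p => pr 0 (encP p)
  | Cond p q => pr 1 (pr (encP p) (encP q))
  | Bel x => pr 2 (encT x)
  | TNeg x => pr 3 (encT x)
  | TAnd x y => pr 4 (pr (encT x) (encT y))
  | TOr x y => pr 5 (pr (encT x) (encT y))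
  | TImp x y => pr 6 (pr (encT x) (encT y))
  | TIff x y => pr 7 (pr (encT x) (encT y))
  end.

Lemma encT_inj : forall a b, encT a = encT b -> a = b.
Proof.
  induction a; destruct b; simpl; intro H; prinj; try discriminate; subst;
    try reflexivity; f_equal; auto using encP_inj.
Qed.

Definition enum (n : nat) : LT :=
  match excluded_middle_informative (exists a, encT a = n) with
  | left H => proj1_sig (constructive_indefinite_description _ H)
  | right _ => TBot
  end.

Lemma enum_surj : forall a, exists n, enum n = a.
Proof.
  intro a; exists (encT a); unfold enum.
  destruct excluded_middle_informative as [H|H].
  - destruct (constructive_indefinite_description _ H) as [b Hb]; simpl.
    apply encT_inj; auto.
  - exfalso; apply H; eauto.
Qed.

Lemma eval_imp_chain v w l a :
  evalLT v w (imp_chain l a) = true <->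
  ((forall g, In g l -> evalLT v w g = true) -> evalLT v w a = true).
Proof.
  induction l as [|g l IH]; simpl.
  - split; auto; intros H; apply H; intros _ [].
  - destruct (evalLT v w g) eqn:E; simpl.
    + rewrite IH. split.
      * intros H1 H2; apply H1; intros; apply H2; auto.
      * intros H1 H2; apply H1; intros g' [<-|Hg]; auto.
    + split; auto. intros _ H. rewrite H in E; auto. discriminate.
Qed.

Lemma eval_tconj v w l :
  evalLT v w (tconj l) = true <-> forall g, In g l -> evalLT v w g = true.
Proof.
  induction l as [|g l IH]; simpl.
  - split; auto; intros _ _ [].
  - rewrite andb_true_iff, IH. split.
    + intros [H1 H2] g' [<-|Hg]; auto.
    + intros H; split; auto.
Qed.

Lemma taut_intro a b :
  (forall v w, evalLT v w a = true -> evalLT v w b = true) -> tautology (TImp a b).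
Proof.
  intros H v w; simpl. destruct (evalLT v w a) eqn:E; simpl; auto.
Qed.

Lemma taut_intro2 a b c :
  (forall v w, evalLT v w a = true -> evalLT v w b = true -> evalLT v w c = true) ->
  tautology (TImp a (TImp b c)).
Proof.
  intros H v w; simpl. destruct (evalLT v w a) eqn:E; simpl; auto.
  destruct (evalLT v w b) eqn:E2; simpl; auto.
Qed.

Lemma thm_t1 a b : Thm a -> tautology (TImp a b) -> Thm b.
Proof. intros H T; eapply r_mp; [apply ax_taut, T | exact H]. Qed.
Arguments thm_t1 {a b}.

Lemma thm_t2 a b c : Thm a -> Thm b -> tautology (TImp a (TImp b c)) -> Thm c.
Proof.
  intros Ha Hb T. eapply r_mp; [eapply r_mp; [apply ax_taut, T | exact Ha] | exact Hb].
Qed.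
Arguments thm_t2 {a b c}.

Lemma chain_weaken l l' a :
  Thm (imp_chain l a) -> (forall g, In g l -> In g l') -> Thm (imp_chain l' a).
Proof.
  intros H I. apply (thm_t1 H). apply taut_intro; intros v w.
  rewrite !eval_imp_chain. intros H1 H2; apply H1; auto.
Qed.

Lemma Der_thm G a : Thm a -> Der G a.
Proof. intro H; exists []; simpl; split; auto. intros _ []. Qed.

Lemma Der_in G a : G a -> Der G a.
Proof.
  intro H; exists [a]; simpl; split.
  - intros g [<-|[]]; auto.
  - apply ax_taut, taut_intro; auto.
Qed.

Lemma Der_mp G a b : Der G (TImp a b) -> Der G a -> Der G b.
Proof.
  intros [l1 [H1 T1]] [l2 [H2 T2]].
  exists (l1 ++ l2); split.
  - intros g Hg; apply in_app_or in Hg; destruct Hg; auto.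
  - apply chain_weaken with (l' := l1 ++ l2) in T1; [|intros; apply in_or_app; auto].
    apply chain_weaken with (l' := l1 ++ l2) in T2; [|intros; apply in_or_app; auto].
    apply (thm_t2 T1 T2). apply taut_intro2; intros v w.
    rewrite !eval_imp_chain. intros A B C.
    specialize (A C); specialize (B C). simpl in A. rewrite B in A. exact A.
Qed.

Lemma Der_t2 G a b c : Der G a -> Der G b -> tautology (TImp a (TImp b c)) -> Der G c.
Proof.
  intros Ha Hb T. eapply Der_mp; [eapply Der_mp; [apply Der_thm, ax_taut, T|exact Ha]|exact Hb].
Qed.
Arguments Der_t2 {G a b c}.

Lemma Der_mono (A B : set) a : Der A a -> (forall x, A x -> B x) -> Der B a.
Proof. intros [l [H T]] I; exists l; split; auto. Qed.

Lemma split_list (S : set) a l :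
  (forall g, In g l -> S g \/ g = a) ->
  exists l', (forall g, In g l' -> S g) /\ (forall g, In g l -> In g l' \/ g = a).
Proof.
  induction l as [|g l IH]; intros H.
  - exists []; simpl; split; auto; intros _ [].
  - destruct IH as [l' [H1 H2]]; [intros; apply H; simpl; auto|].
    destruct (H g (or_introl eq_refl)) as [Sg|Eg].
    + exists (g :: l'); split.
      * intros g' [<-|Hg]; auto.
      * intros g' [<-|Hg]; simpl; auto. destruct (H2 g' Hg); auto.
    + exists l'; split; auto. intros g' [<-|Hg]; auto.
Qed.

Lemma deduction (S : set) a b : Der (fun x => S x \/ x = a) b -> Der S (TImp a b).
Proof.
  intros [l [H T]]. destruct (split_list S a l H) as [l' [H1 H2]].
  exists l'; split; auto. apply (thm_t1 T). apply taut_intro; intros v w.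
  rewrite !eval_imp_chain. intros A B. simpl.
  destruct (evalLT v w a) eqn:Ea; simpl; auto.
  apply A. intros g Hg. destruct (H2 g Hg); subst; auto.
Qed.

Fixpoint lchain (S : set) (n : nat) : set :=
  match n with
  | 0 => S
  | Datatypes.S m =>
      let C := lchain S m in
      if excluded_middle_informative (Der (fun x => C x \/ x = enum m) TBot)
      then (fun x => C x \/ x = TNeg (enum m))
      else (fun x => C x \/ x = enum m)
  end.

Lemma lchain_step S m x : lchain S m x -> lchain S (Datatypes.S m) x.
Proof. intro H; simpl; destruct excluded_middle_informative; auto. Qed.

Lemma lchain_mono S m n x : m <= n -> lchain S m x -> lchain S n x.
Proof. induction 1; auto using lchain_step. Qed.

Lemma split_cons (C : set) a :
  ~ Der C TBot -> Der (fun x => C x \/ x = a) TBot -> ~ Der (fun x => C x \/ x = TNeg a) TBot.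
Proof.
  intros N D1 D2. apply deduction in D1. apply deduction in D2. apply N.
  apply (Der_t2 D1 D2). apply taut_intro2; intros v w; simpl.
  destruct (evalLT v w a); simpl; auto.
Qed.

Lemma lchain_cons S n : ~ Der S TBot -> ~ Der (lchain S n) TBot.
Proof.
  intro N; induction n; simpl; auto.
  destruct excluded_middle_informative; auto. apply split_cons; auto.
Qed.
Arguments lchain_cons {S} n.

Lemma lindenbaum S : ~ Der S TBot -> exists Om, MCS Om /\ (forall x, S x -> Om x).
Proof.
  intro N. exists (fun x => exists n, lchain S n x). split; [split|].
  - intros [l [H T]].
    assert (E : exists M, forall g, In g l -> lchain S M g).
    { clear T. induction l as [|g l IH].
      - exists 0; intros _ [].
      - destruct IH as [M HM]; [intros; apply H; simpl; auto|].
        destruct (H g (or_introl eq_refl)) as [k Hk].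
        exists (M + k); intros g' [<-|Hg].
        + apply lchain_mono with k; auto. apply Nat.le_add_l.
        + apply lchain_mono with M; auto. apply Nat.le_add_r. }
    destruct E as [M HM]. apply (lchain_cons M N). exists l; auto.
  - intro a. destruct (enum_surj a) as [n <-].
    destruct (excluded_middle_informative
                (Der (fun x => lchain S n x \/ x = enum n) TBot)) eqn:E.
    + right; exists (Datatypes.S n); simpl; rewrite E; auto.
    + left; exists (Datatypes.S n); simpl; rewrite E; auto.
  - intros x Hx; exists 0; auto.
Qed.
Arguments lindenbaum {S}.

Lemma mcs_der G a : MCS G -> Der G a -> G a.
Proof.
  intros [N C] H. destruct (C a) as [Ha|Ha]; auto. exfalso; apply N.
  apply (Der_t2 H (Der_in _ _ Ha)). apply taut_intro2; intros v w; simpl.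
  intros ->; auto.
Qed.

Lemma mcs_t1 G a b : MCS G -> G a -> tautology (TImp a b) -> G b.
Proof.
  intros M Ha T. apply mcs_der; auto. eapply Der_mp; [apply Der_thm, ax_taut, T|apply Der_in; auto].
Qed.
Arguments mcs_t1 {G a b}.

Lemma mcs_t2 G a b c : MCS G -> G a -> G b -> tautology (TImp a (TImp b c)) -> G c.
Proof.
  intros M Ha Hb T. apply mcs_der; auto. apply (Der_t2 (Der_in _ _ Ha) (Der_in _ _ Hb) T).
Qed.
Arguments mcs_t2 {G a b c}.

Lemma mcs_thm G a : MCS G -> Thm a -> G a.
Proof. intros M T; apply mcs_der; auto; apply Der_thm; auto. Qed.
Arguments mcs_thm {G a}.

Lemma mcs_mp G a b : MCS G -> G (TImp a b) -> G a -> G b.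
Proof. intros M H1 H2; apply mcs_der; auto; eapply Der_mp; apply Der_in; eauto. Qed.
Arguments mcs_mp {G a b}.

Lemma mcs_incons G a : MCS G -> G a -> G (TNeg a) -> False.
Proof.
  intros M H1 H2. apply (proj1 M). apply (Der_t2 (Der_in _ _ H1) (Der_in _ _ H2)).
  apply taut_intro2; intros v w; simpl; intros ->; discriminate.
Qed.
Arguments mcs_incons {G a}.

Definition nxt (i : idx3) : idx3 := match i with i0 => i1 | i1 => i2 | i2 => i0 end.

Theorem corollary1 :
  forall (G : set) (d : PL) (D : set) (p : PL) (i : idx3),
    MCS G ->
    inS G (D, p, i) ->
    (maxel G (trset G d) (D, p, i) -> likely G d D) /\
    (likely G d D -> maxel G (trset G d) (D, d, i)).
Proof.
  intros G d D p i MG [MD ED]. split.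
  - intros [[_ Dd] Mx]. simpl in Dd.
    assert (Lp : likely G p D).
    { assert (Y : trset G d (D, p, nxt i)) by (split; simpl; auto).
      destruct (Mx _ Y) as [[L _]|Hc].
      - simpl; right; destruct i; simpl; auto.
      - exact L.
      - exfalso; destruct i; simpl in Hc; intuition discriminate. }
    set (chi := PIff d (PAnd p d)).
    set (Sg := fun x => (G x /\ cond_literal x) \/ x = TP (PNeg chi)).
    destruct (classic (Der Sg TBot)) as [HD|HN].
    + destruct HD as [l [Hl T]].
      destruct (split_list (fun x => G x /\ cond_literal x) (TP (PNeg chi)) l Hl)
        as [l' [H1 H2]].
      assert (T' : Thm (TImp (tconj l') (TP chi))).
      { apply (thm_t1 T). apply taut_intro; intros v w.
        rewrite eval_imp_chain. simpl. intros A.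
        destruct (evalLT v w (tconj l')) eqn:E; simpl; auto.
        rewrite eval_tconj in E.
        destruct (evalPL v chi) eqn:Ec; auto. exfalso.
        assert (false = true); [|discriminate].
        apply A. intros g Hg. destruct (H2 g Hg) as [Hg' | ->]; auto.
        change (negb (evalPL v chi) = true); rewrite Ec; reflexivity. }
      apply r_s5f in T'; [|intros; apply H1; auto].
      assert (Gc : G (tconj l')).
      { apply mcs_der; auto. exists l'; split; [intros; apply H1; auto|].
        apply ax_taut; intros v w; apply eval_imp_chain. intros A; apply eval_tconj; auto. }
      assert (GB : G (Cond (PNeg chi) PBot)) by (exact (mcs_mp MG (mcs_thm MG T') Gc)).
      intros q Gq.
      assert (G1 : G (TIff (Cond d q) (Cond (PAnd p d) q))).
      { exact (mcs_mp MG (mcs_thm MG (ax_lle d (PAnd p d) q)) GB). }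
      assert (G2 : G (Cond (PAnd p d) q)).
      { apply (mcs_t2 MG G1 Gq). apply taut_intro2; intros v w; simpl.
        destruct (w (Cond d q)), (w (Cond (PAnd p d) q)); simpl; auto. }
      assert (G3 : G (Cond p (PImp d q))).
      { exact (mcs_mp MG (mcs_thm MG (ax_ded q p d)) G2). }
      apply Lp in G3.
      apply (mcs_t2 MD G3 Dd). apply taut_intro2; intros v w; simpl.
      destruct (evalPL v d), (evalPL v q); simpl; auto.
    + exfalso. destruct (lindenbaum HN) as [Om [MO SO]].
      assert (Onc : Om (TP (PNeg chi))) by (apply SO; right; auto).
      assert (EO : cond_equiv G Om).
      { intros a b; split; intro H.
        - apply SO; left; split; auto; constructor.
        - destruct (proj2 MG (Cond a b)) as [|H']; auto. exfalso.
          apply (mcs_incons MO H). apply SO; left; split; auto; constructor. }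
      assert (Od : Om (TP d)).
      { apply (mcs_t1 MO Onc). apply taut_intro; intros v w; simpl.
        destruct (evalPL v d), (evalPL v p); simpl; auto. }
      assert (Y : trset G d (Om, p, nxt i)) by (split; simpl; auto).
      destruct (Mx _ Y) as [[_ Op]|Hc].
      * simpl; right; destruct i; simpl; auto.
      * apply (proj1 MO). apply (Der_t2 (Der_in _ _ Onc) (Der_in _ _ Op)).
        apply taut_intro2; intros v w; simpl.
        destruct (evalPL v d), (evalPL v p); simpl; auto.
      * destruct i; simpl in Hc; intuition discriminate.
  - intros L. assert (Dd : D (TP d)) by (apply L, mcs_thm; auto; apply ax_id).
    split; [split; simpl; auto|].
    intros [[Om q] j] [_ Od] _. simpl in Od |- *. left; auto.
Qed.
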